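(* Let $d$ be a positive integer. (1) If $D=T^{2d}+T^{e}$ with $0\le e<d$, then the partial quotients $a_h$ ($h\ge0$) of the continued fraction expansion of $\sqrt D$ satisfy $\deg a_h=d$ for $h$ even and $\deg a_h=d-e$ for $h$ odd. (2) If $D=T^{2d}+T^{d}$, then all partial quotients $a_h$ ($h\ge0$) of the continued fraction expansion of $\sqrt D$ have degree $d$. Moreover, in both cases $l(\sqrt D)=d$.
   Context: $\mathbb{Q}((1/T))$ is the field of formal Laurent series $\sum_{i=-\infty}^m c_iT^i$, $c_i\in\mathbb{Q}$; $\deg$ of a nonzero series is the exponent of its leading term, $\deg 0=-\infty$. $\sqrt D\in\mathbb{Q}((1/T))$ denotes the square root $T^d(1+\dots)$ of $D$. The continued fraction expansion $[a_0,a_1,\dots]$ of $\alpha$ is given by $\alpha_0=\alpha$, $a_i=\lfloor\alpha_i\rfloor$ (the sum of the terms of nonnegative degree), $\alpha_{i+1}=(\alpha_i-a_i)^{-1}$. For $\alpha\notin\mathbb{Q}(T)$, the Lagrange constant $l(\alpha)\in\mathbb{Z}\cup\{\infty\}$ is the supremum of integers $k$ such that $\deg(\alpha-p/q)\le-2\deg q-k$ for infinitely many $p,q\in\mathbb{Q}[T]$, $q\ne0$. *)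

(* Defs.v *)
(* Laurent series in 1/T over Q are modelled as coefficient
   functions int -> rat (coefficient of T^i) with support bounded above. *)
From mathcomp Require Import all_boot all_order all_algebra.
From Stdlib Require Import List.
Set Implicit Arguments. Unset Strict Implicit. Unset Printing Implicit Defensive.
Import Order.TTheory GRing.Theory Num.Theory.
Local Open Scope ring_scope.

Definition laurent := int -> rat.

Definition is_laurent (c : laurent) : Prop :=
  exists m : int, forall i : int, m < i -> c i = 0.

(* deg c <= m  (holds for c = 0, whose degree is -oo) *)
Definition deg_le (c : laurent) (m : int) : Prop :=
  forall i : int, m < i -> c i = 0.

Definition polyL (p : {poly rat}) : laurent :=
  fun i => if (0 <= i) then p`_(absz i) else 0.

Definition oneL : laurent := polyL 1.

Definition subL (a b : laurent) : laurent := fun i => a i - b i.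

(* c = a * b in Q((1/T)): the c_n = sum_i a_i b_(n-i), a finite sum for
   Laurent series; expressed as the eventual value of the symmetric
   partial sums over the windows -M <= i <= M. *)
Definition is_prod (a b c : laurent) : Prop :=
  forall n : int, exists N : nat, forall M : nat, (N <= M)%N ->
    c n = \sum_(j < (2 * M).+1) a (j%:Z - M%:Z) * b (n - (j%:Z - M%:Z)).

Definition is_floor (x : laurent) (p : {poly rat}) : Prop :=
  forall i : int, 0 <= i -> x i = p`_(absz i).

Definition is_sqrt (D : {poly rat}) (d : nat) (s : laurent) : Prop :=
  is_laurent s /\ is_prod s s (polyL D) /\ s d%:Z = 1 /\ deg_le s d%:Z.

(* alpha_h and a_h = partial quotients of the continued fraction of x:
   alpha_0 = x, a_h = floor alpha_h, alpha_(h+1) = (alpha_h - a_h)^(-1) *)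
Definition cf_expansion (x : laurent) (alpha : nat -> laurent)
    (a : nat -> {poly rat}) : Prop :=
  alpha 0%N = x /\
  forall h : nat, is_laurent (alpha h) /\ is_floor (alpha h) (a h) /\
     is_prod (subL (alpha h) (polyL (a h))) (alpha h.+1) oneL.

Definition degp (q : {poly rat}) : int := ((size q).-1)%:Z.

Definition good_approx (x : laurent) (k : int) (r : laurent) : Prop :=
  is_laurent r /\
  exists p q : {poly rat}, q != 0 /\ is_prod (polyL q) r (polyL p) /\
    deg_le (subL x r) (- (2 * degp q) - k).

(* infinitely many fractions p/q satisfy the Lagrange inequality for k *)
Definition lagrange_holds (x : laurent) (k : int) : Prop :=
  ~ (exists l : list laurent, forall r, good_approx x k r -> List.In r l).

(* l(x) = k  (k is the supremum, i.e. the maximum, of admissible integers) *)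
Definition lagrange_eq (x : laurent) (k : int) : Prop :=
  lagrange_holds x k /\ forall k' : int, lagrange_holds x k' -> k' <= k.

(* Main.v *)
Require Import Defs.
From mathcomp Require Import all_boot all_order all_algebra.
From mathcomp Require Import zify ring lra.
From Stdlib Require Import FunctionalExtensionality Classical.
From Stdlib Require List.
Set Implicit Arguments. Unset Strict Implicit. Unset Printing Implicit Defensive.
Import Order.TTheory GRing.Theory Num.Theory.
Local Open Scope ring_scope.

Definition win (M : nat) : seq int := [seq (j%:Z - M%:Z) | j <- iota 0 (2 * M).+1].

Lemma sum_win (F : int -> rat) M :
  \sum_(j < (2 * M).+1) F (j%:Z - M%:Z) = \sum_(i <- win M) F i.
Proof. by rewrite /win big_map -(big_mkord xpredT (fun j : nat => F (j%:Z - M%:Z))) /index_iota subn0. Qed.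

Lemma mem_win M i : (i \in win M) = (- M%:Z <= i <= M%:Z).
Proof.
apply/mapP/idP.
  case=> j; rewrite mem_iota add0n => /andP[_ Hj] ->. apply/andP; split; lia.
move=> /andP[H1 H2]. exists (absz (i + M%:Z)); last by lia.
rewrite mem_iota add0n; apply/andP; split; lia.
Qed.

Lemma uniq_win M : uniq (win M).
Proof. rewrite map_inj_uniq ?iota_uniq // => x y /= H; lia. Qed.

Definition covers (F : int -> rat) (l : seq int) := forall i, F i != 0 -> i \in l.

Lemma sum_cover (F : int -> rat) l1 l2 : uniq l1 -> uniq l2 ->
  covers F l1 -> covers F l2 -> \sum_(i <- l1) F i = \sum_(i <- l2) F i.
Proof.
move=> u1 u2 c1 c2.
have E l : \sum_(i <- l) F i = \sum_(i <- filter (fun i => F i != 0) l) F i.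
  rewrite big_filter [in RHS]big_mkcond /=; apply: eq_bigr => i _.
  by case: eqP => [->|].
rewrite (E l1) (E l2); apply: perm_big; apply: uniq_perm; rewrite ?filter_uniq //.
move=> i; rewrite !mem_filter; case H: (F i != 0) => //=.
by rewrite (c1 _ H) (c2 _ H).
Qed.

Definition prodF (a b : laurent) (n : int) : int -> rat := fun i => a i * b (n - i).

Lemma is_prodE a b c : is_prod a b c <->
  forall n, exists N : nat, forall M : nat, (N <= M)%N -> c n = \sum_(i <- win M) prodF a b n i.
Proof.
split=> H n; case: (H n) => N HN; exists N => M HM; rewrite (HN M) //.
  by rewrite -sum_win.
by rewrite /prodF -sum_win.
Qed.

Lemma prod_unique a b c c' : is_prod a b c -> is_prod a b c' -> c = c'.
Proof.
move=> /is_prodE H /is_prodE H'; apply: functional_extensionality => n.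
case: (H n) => N HN; case: (H' n) => N' HN'.
by rewrite (HN (maxn N N')) ?leq_maxl // (HN' (maxn N N')) ?leq_maxr.
Qed.

Definition addL (a b : laurent) : laurent := fun i => a i + b i.
Definition scaleL (k : rat) (a : laurent) : laurent := fun i => k * a i.
Definition shiftL (e : int) (a : laurent) : laurent := fun i => a (i + e).
Definition zeroL : laurent := fun _ => 0.

Lemma prod_addr a b b' c c' : is_prod a b c -> is_prod a b' c' -> is_prod a (addL b b') (addL c c').
Proof.
move=> /is_prodE H /is_prodE H'; apply/is_prodE => n.
case: (H n) => N HN; case: (H' n) => N' HN'; exists (maxn N N') => M HM.
rewrite /addL (HN M) ?(leq_trans (leq_maxl _ _) HM) // (HN' M) ?(leq_trans (leq_maxr _ _) HM) //.
by rewrite -big_split; apply: eq_bigr => i _; rewrite /prodF mulrDr.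
Qed.

Lemma prod_addl a a' b c c' : is_prod a b c -> is_prod a' b c' -> is_prod (addL a a') b (addL c c').
Proof.
move=> /is_prodE H /is_prodE H'; apply/is_prodE => n.
case: (H n) => N HN; case: (H' n) => N' HN'; exists (maxn N N') => M HM.
rewrite /addL (HN M) ?(leq_trans (leq_maxl _ _) HM) // (HN' M) ?(leq_trans (leq_maxr _ _) HM) //.
by rewrite -big_split; apply: eq_bigr => i _; rewrite /prodF mulrDl.
Qed.

Lemma prod_subr a b b' c c' : is_prod a b c -> is_prod a b' c' -> is_prod a (subL b b') (subL c c').
Proof.
move=> /is_prodE H /is_prodE H'; apply/is_prodE => n.
case: (H n) => N HN; case: (H' n) => N' HN'; exists (maxn N N') => M HM.
rewrite /subL (HN M) ?(leq_trans (leq_maxl _ _) HM) // (HN' M) ?(leq_trans (leq_maxr _ _) HM) //.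
by rewrite -sumrB; apply: eq_bigr => i _; rewrite /prodF mulrBr.
Qed.

Lemma prod_subl a a' b c c' : is_prod a b c -> is_prod a' b c' -> is_prod (subL a a') b (subL c c').
Proof.
move=> /is_prodE H /is_prodE H'; apply/is_prodE => n.
case: (H n) => N HN; case: (H' n) => N' HN'; exists (maxn N N') => M HM.
rewrite /subL (HN M) ?(leq_trans (leq_maxl _ _) HM) // (HN' M) ?(leq_trans (leq_maxr _ _) HM) //.
by rewrite -sumrB; apply: eq_bigr => i _; rewrite /prodF mulrBl.
Qed.

Lemma prod_scaler k a b c : is_prod a b c -> is_prod a (scaleL k b) (scaleL k c).
Proof.
move=> /is_prodE H; apply/is_prodE => n; case: (H n) => N HN; exists N => M HM.
rewrite /scaleL (HN M) // mulr_sumr; apply: eq_bigr => i _; rewrite /prodF; ring.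
Qed.

Lemma prod_scalel k a b c : is_prod a b c -> is_prod (scaleL k a) b (scaleL k c).
Proof.
move=> /is_prodE H; apply/is_prodE => n; case: (H n) => N HN; exists N => M HM.
rewrite /scaleL (HN M) // mulr_sumr; apply: eq_bigr => i _; rewrite /prodF; ring.
Qed.

Lemma prod_shift e a b c : is_prod a b c -> is_prod a (shiftL e b) (shiftL e c).
Proof.
move=> /is_prodE H; apply/is_prodE => n; case: (H (n + e)) => N HN; exists N => M HM.
rewrite /shiftL (HN M) //; apply: eq_bigr => i _; rewrite /prodF; do 2 f_equal; lia.
Qed.

Lemma prodF_nz a b ma mb n i : deg_le a ma -> deg_le b mb -> prodF a b n i != 0 ->
  n - mb <= i <= ma.
Proof.
move=> Ha Hb; rewrite /prodF mulf_eq0 negb_or => /andP[H1 H2].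
have h1 : i <= ma by rewrite leNgt; apply/negP => /Ha; apply/eqP.
have h2 : n - i <= mb by rewrite leNgt; apply/negP => /Hb; apply/eqP.
apply/andP; split => //; lia.
Qed.

Lemma prod_sum a b c ma mb n l : deg_le a ma -> deg_le b mb -> is_prod a b c ->
  uniq l -> covers (prodF a b n) l -> c n = \sum_(i <- l) prodF a b n i.
Proof.
move=> Ha Hb /is_prodE H ul cl; case: (H n) => N HN.
set K := (absz ma + absz mb + absz n)%N.
rewrite (HN (maxn N K)) ?leq_maxl //; apply: sum_cover => //; first exact: uniq_win.
move=> i /(prodF_nz Ha Hb) Hi; rewrite mem_win.
have : (K <= maxn N K)%N by apply: leq_maxr.
move: Hi; rewrite /K; move: (maxn N K) => M; lia.
Qed.

Lemma sum_prod a b c ma mb : deg_le a ma -> deg_le b mb ->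
  (forall n, exists l, uniq l /\ covers (prodF a b n) l /\ c n = \sum_(i <- l) prodF a b n i) ->
  is_prod a b c.
Proof.
move=> Ha Hb H; apply/is_prodE => n; case: (H n) => l [ul [cl ->]].
exists (absz ma + absz mb + absz n)%N => M HM; apply: sum_cover => //; first exact: uniq_win.
move=> i /(prodF_nz Ha Hb) Hi; rewrite mem_win; move: Hi HM; lia.
Qed.

Definition lead_at (x : laurent) (m : int) := x m != 0 /\ deg_le x m.

Lemma deg_le_mono x m m' : deg_le x m -> m <= m' -> deg_le x m'.
Proof. move=> H Hm i Hi; apply: H; lia. Qed.

Lemma laurent_nat x : is_laurent x -> exists m : nat, deg_le x m%:Z.
Proof. case=> m Hm; exists (absz m); apply: (deg_le_mono Hm); lia. Qed.

Lemma prod_deg_le a b c ma mb : deg_le a ma -> deg_le b mb -> is_prod a b c -> deg_le c (ma + mb).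
Proof.
move=> Ha Hb H n Hn; rewrite (prod_sum (l := [::]) Ha Hb H) ?big_nil //.
move=> i /(prodF_nz Ha Hb) Hi; lia.
Qed.

Lemma prod_lead a b c ma mb : lead_at a ma -> lead_at b mb -> is_prod a b c ->
  c (ma + mb) = a ma * b mb.
Proof.
move=> [_ Ha] [_ Hb] H; rewrite (prod_sum (l := [:: ma]) Ha Hb H) ?big_seq1 //.
  by rewrite /prodF; do 2 f_equal; lia.
move=> i /(prodF_nz Ha Hb) Hi; rewrite inE; apply/eqP; lia.
Qed.

Lemma lead_exists x i0 : is_laurent x -> x i0 != 0 -> exists m, lead_at x m.
Proof.
move=> [m Hm] H0.
have ex : exists j : nat, x (i0 + j%:Z) != 0 by exists 0%N; rewrite addr0.
have ub : forall j : nat, x (i0 + j%:Z) != 0 -> (j <= absz (m - i0))%N.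
  move=> j Hj; have : i0 + j%:Z <= m.
    by rewrite leNgt; apply/negP => /Hm; apply/eqP.
  lia.
case: (ex_maxnP ex ub) => j Hj Hmax.
exists (i0 + j%:Z); split => // i Hi; apply/eqP; apply/negP => /negP Hx.
have Hle : i <= m by rewrite leNgt; apply/negP => /Hm; apply/eqP.
have : x (i0 + (absz (i - i0))%:Z) != 0.
  by have -> : i0 + (absz (i - i0))%:Z = i by lia.
move/Hmax; lia.
Qed.

Lemma prod_laurent a b c : is_laurent a -> is_laurent b -> is_prod a b c -> is_laurent c.
Proof. move=> [ma Ha] [mb Hb] H; exists (ma + mb); exact: prod_deg_le Ha Hb H. Qed.

Lemma prod_exists a b : is_laurent a -> is_laurent b -> exists c, is_prod a b c.
Proof.
move=> [ma Ha] [mb Hb].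
exists (fun n => \sum_(i <- win (absz ma + absz mb + absz n)) prodF a b n i).
apply: (sum_prod Ha Hb) => n; exists (win (absz ma + absz mb + absz n)); split; first exact: uniq_win.
split => // i /(prodF_nz Ha Hb) Hi; rewrite mem_win; lia.
Qed.

Lemma prod_comm a b c : is_laurent a -> is_laurent b -> is_prod a b c -> is_prod b a c.
Proof.
move=> [ma Ha] [mb Hb] H; apply: (sum_prod Hb Ha) => n.
set K := (absz ma + absz mb + absz n)%N.
exists (map (fun i => n - i) (win K)); split.
  rewrite map_inj_uniq ?uniq_win // => x y /= E; lia.
split.
  move=> i /(prodF_nz Hb Ha) Hi; apply/mapP; exists (n - i); last by lia.
  rewrite mem_win; lia.
rewrite (prod_sum (l := win K) Ha Hb H) ?uniq_win //.
  rewrite [in RHS]big_map; apply: eq_bigr => i _; rewrite /prodF mulrC; do 2 f_equal; lia.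
move=> i /(prodF_nz Ha Hb) Hi; rewrite mem_win; lia.
Qed.

Lemma polyL_deg p : deg_le (polyL p) (size p)%:Z.
Proof.
move=> i Hi; rewrite /polyL; case: ifP => // _; apply: nth_default; case: i Hi => // n; rewrite ltz_nat => /ltnW //.
Qed.

Lemma polyL_laurent p : is_laurent (polyL p).
Proof. exists (size p)%:Z; exact: (@polyL_deg p). Qed.

Lemma polyL_nat p (k : nat) : polyL p k%:Z = p`_k.
Proof. by rewrite /polyL. Qed.

Lemma polyL_neg p (i : int) : i < 0 -> polyL p i = 0.
Proof. by rewrite /polyL => H; case: ifP => //; lia. Qed.

Lemma prod_poly p q : is_prod (polyL p) (polyL q) (polyL (p * q)).
Proof.
apply: (sum_prod (@polyL_deg p) (@polyL_deg q)) => n.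
case: (ltP n 0) => Hn.
  exists [::]; split => //; split; last by rewrite big_nil polyL_neg.
  move=> i; rewrite /prodF mulf_eq0 negb_or => /andP[H1 H2].
  have h1 : 0 <= i by move: H1; rewrite /polyL; case: ifP.
  have h2 : 0 <= n - i by move: H2; rewrite /polyL; case: ifP.
  lia.
have -> : n = (absz n)%:Z by lia.
move: (absz n) => k {Hn}.
exists (map Posz (iota 0 k.+1)); split.
  by rewrite map_inj_uniq ?iota_uniq // => x y [].
split.
  move=> i; rewrite /prodF mulf_eq0 negb_or => /andP[H1 H2].
  have h1 : 0 <= i by move: H1; rewrite /polyL; case: ifP.
  have h2 : 0 <= k%:Z - i by move: H2; rewrite /polyL; case: ifP.
  apply/mapP; exists (absz i); last by lia.
  rewrite mem_iota; lia.
have -> : iota 0 k.+1 = index_iota 0 k.+1 by rewrite /index_iota subn0.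
rewrite polyL_nat coefM big_map big_mkord.
apply: eq_bigr => j _; rewrite /prodF polyL_nat.
have -> : k%:Z - (nat_of_ord j)%:Z = (k - j)%N%:Z by have := ltn_ord j; lia.
by rewrite polyL_nat.
Qed.

Lemma oneLE i : oneL i = if i == 0 then 1 else 0.
Proof. rewrite /oneL /polyL coef1; case: i => [[|n]|n] //=. Qed.

Lemma prod_one a : is_laurent a -> is_prod a oneL a.
Proof.
move=> [ma Ha]; have Ho : deg_le oneL (size (1 : {poly rat}))%:Z := @polyL_deg 1.
apply: (sum_prod Ha Ho) => n.
exists [:: n]; split => //; split; last by rewrite big_seq1 /prodF oneLE subrr eqxx mulr1.
move=> i; rewrite /prodF oneLE inE; case: (eqVneq (n - i) 0) => E.
  by move=> _; apply/eqP; lia.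
by rewrite mulr0 eqxx.
Qed.

Lemma prod_assoc a b c ab bc abc : is_laurent a -> is_laurent b -> is_laurent c ->
  is_prod a b ab -> is_prod b c bc -> is_prod ab c abc -> is_prod a bc abc.
Proof.
move=> /laurent_nat [ma Ha] /laurent_nat [mb Hb] /laurent_nat [mc Hc] Hab Hbc Habc.
have Dab := prod_deg_le Ha Hb Hab; have Dbc := prod_deg_le Hb Hc Hbc.
apply: (sum_prod Ha Dbc) => n.
set K := (absz n + ma + mb + mc)%N; set L := win K.
have uL : uniq L by exact: uniq_win.
exists L; split => //; split.
  move=> i /(prodF_nz Ha Dbc) Hi; rewrite mem_win; lia.
rewrite (prod_sum (l := L) Dab Hc Habc) //; last first.
  move=> i /(prodF_nz Dab Hc) Hi; rewrite mem_win; lia.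
transitivity (\sum_(i <- L) \sum_(j <- L) a j * b (i - j) * c (n - i)).
  apply: eq_big_seq => i; rewrite mem_win => HiL.
  case: (eqVneq (c (n - i)) 0) => Hci.
    by rewrite /prodF Hci mulr0 big1 // => j _; rewrite mulr0.
  have hi : n - i <= mc%:Z by rewrite leNgt; apply/negP => /Hc; apply/eqP.
  rewrite /prodF (prod_sum (l := L) Ha Hb Hab) // ?mulr_suml //.
  move=> j /(prodF_nz Ha Hb) Hj; rewrite mem_win; lia.
rewrite exchange_big /=; apply: eq_big_seq => j; rewrite mem_win => HjL.
case: (eqVneq (a j) 0) => Haj.
  by rewrite /prodF Haj mul0r big1 // => i _; rewrite !mul0r.
have hj : j <= ma%:Z by rewrite leNgt; apply/negP => /Ha; apply/eqP.
rewrite /prodF (prod_sum (l := map (fun i => i - j) L) Hb Hc Hbc).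
- rewrite [in RHS]big_map [in RHS]mulr_sumr; apply: eq_bigr => i _; rewrite mulrA; do 2 f_equal; lia.
- rewrite map_inj_uniq // => x y /= E; lia.
move=> i /(prodF_nz Hb Hc) Hi; apply/mapP; exists (i + j); last by lia.
rewrite mem_win; lia.
Qed.

Lemma nonzero_of_prod u v c i : is_prod u v c -> c i != 0 -> exists j, u j != 0.
Proof.
move=> /is_prodE H Hc; case: (H i) => N HN; move: Hc; rewrite (HN N) //.
move=> Hs; case: (Classical_Prop.classic (exists j, u j != 0)) => // Hn.
move: Hs; rewrite big1 ?eqxx //.
move=> j _; rewrite /prodF.
have -> : u j = 0 by apply/eqP; apply/negPn/negP => Hj; apply: Hn; exists j.
by rewrite mul0r.
Qed.

Lemma prod_cancel u v w c : is_laurent u -> is_laurent v -> is_laurent w ->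
  (exists i, u i != 0) -> is_prod u v c -> is_prod u w c -> v = w.
Proof.
move=> Lu Lv Lw [i0 Hi0] Hv Hw.
have H := prod_subr Hv Hw.
apply: functional_extensionality => i; apply/eqP; apply/negPn/negP => Hne.
have Lz : is_laurent (subL v w).
  case: Lv => mv Hmv; case: Lw => mw Hmw; exists (Num.max mv mw) => j Hj.
  rewrite /subL Hmv ?Hmw ?subrr //; move: Hj; rewrite gt_max => /andP[] //.
have [mu [Hmu Du]] := lead_exists Lu Hi0.
have [mz [Hmz Dz]] : exists m, lead_at (subL v w) m.
  by apply: (lead_exists (i0 := i)) => //; rewrite /subL subr_eq0.
have := prod_lead (conj Hmu Du) (conj Hmz Dz) H.
by rewrite /subL subrr => /esym/eqP; rewrite mulf_eq0 (negbTE Hmu) (negbTE Hmz).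
Qed.

Lemma shiftL_comp a b x : shiftL a (shiftL b x) = shiftL (a + b) x.
Proof. apply: functional_extensionality => i; rewrite /shiftL addrA. by []. Qed.

Lemma shiftL0 x : shiftL 0 x = x.
Proof. apply: functional_extensionality => i; by rewrite /shiftL addr0. Qed.

Lemma shiftL_deg x m e : deg_le x m -> deg_le (shiftL e x) (m - e).
Proof. move=> H i Hi; rewrite /shiftL H //; lia. Qed.

Lemma shiftL_laurent x e : is_laurent x -> is_laurent (shiftL e x).
Proof. case=> m H; exists (m - e); exact: shiftL_deg. Qed.

Lemma prod_shift_move m u v c : is_laurent u -> is_laurent v ->
  is_prod (shiftL m u) v c -> is_prod u (shiftL m v) c.
Proof.
move=> Lu Lv H.
have H1 := prod_comm (shiftL_laurent m Lu) Lv H.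
have H2 := prod_shift (- m) H1.
rewrite shiftL_comp addNr shiftL0 in H2.
have H3 := prod_comm Lv Lu H2.
have H4 := prod_shift m H3.
by rewrite shiftL_comp addrN shiftL0 in H4.
Qed.

Lemma prod_shiftl e a b c : is_laurent a -> is_laurent b -> is_prod a b c ->
  is_prod (shiftL e a) b (shiftL e c).
Proof.
move=> La Lb H; apply: (prod_comm Lb (shiftL_laurent e La)).
exact: prod_shift (prod_comm La Lb H).
Qed.

Fixpoint ws (u : laurent) (k : nat) : seq rat :=
  match k with
  | 0%N => [:: (u 0)^-1]
  | k'.+1 => rcons (ws u k')
      (- (u 0)^-1 * \sum_(j < k'.+1) u (- (j.+1)%:Z) * nth 0 (ws u k') (k' - j))
  end.

Lemma size_ws u k : size (ws u k) = k.+1.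
Proof. by elim: k => //= k IH; rewrite size_rcons IH. Qed.

Lemma nth_ws u k j : (j <= k)%N -> nth 0 (ws u k) j = nth 0 (ws u j) j.
Proof.
elim: k => [|k IH]; first by rewrite leqn0 => /eqP ->.
rewrite leq_eqVlt => /orP[/eqP -> //|Hj].
by rewrite /= nth_rcons size_ws Hj IH.
Qed.

Definition wco u k := nth 0 (ws u k) k.

Lemma wcoS u k : wco u k.+1 =
  - (u 0)^-1 * \sum_(j < k.+1) u (- (j.+1)%:Z) * wco u (k - j).
Proof.
rewrite /wco /= nth_rcons size_ws ltnn eqxx; congr (_ * _); apply: eq_bigr => j _.
by rewrite nth_ws // leq_subr.
Qed.

Lemma inv0 u : deg_le u 0 -> u 0 != 0 ->
  exists v, deg_le v 0 /\ is_prod u v oneL.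
Proof.
move=> Du Hu0.
pose v : laurent := fun n => if n <= 0 then wco u (absz n) else 0.
have Dv : deg_le v 0 by move=> i Hi; rewrite /v; case: ifP => //; lia.
exists v; split => //; apply: (sum_prod Du Dv) => n.
case: (ltP 0 n) => Hn.
  exists [::]; split => //; split; last by rewrite big_nil oneLE; case: eqP => //; lia.
  move=> i /(prodF_nz Du Dv) Hi; lia.
have -> : n = - (absz n)%:Z by lia.
move: (absz n) => k {Hn}.
exists (map (fun j : nat => - j%:Z) (iota 0 k.+1)); split.
  rewrite map_inj_uniq ?iota_uniq // => x y /= E; lia.
split.
  move=> i /(prodF_nz Du Dv) Hi; apply/mapP; exists (absz i); last by lia.
  rewrite mem_iota; lia.
have -> : iota 0 k.+1 = index_iota 0 k.+1 by rewrite /index_iota subn0.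
rewrite big_map big_mkord.
have E : forall j : 'I_k.+1, prodF u v (- k%:Z) (- (nat_of_ord j)%:Z) =
    u (- (nat_of_ord j)%:Z) * wco u (k - j).
  move=> j; rewrite /prodF /v; have := ltn_ord j => Hj.
  case: ifP => H; last by lia.
  do 2 f_equal; lia.
rewrite (eq_bigr _ (fun j _ => E j)).
case: k E => [|k] E.
  by rewrite big_ord1 oneLE /= /wco /= mulfV.
rewrite big_ord_recl /= subn0 wcoS oneLE.
case: eqP => [|_]; first by lia.
set S := \sum_(j < k.+1) _.
by rewrite oppr0 mulrA mulrN mulfV // mulN1r addNr.
Qed.

Lemma inv_exists u : is_laurent u -> (exists i, u i != 0) ->
  exists v, is_laurent v /\ is_prod u v oneL.
Proof.
move=> Lu [i0 Hi0]; have [m [Hm Dm]] := lead_exists Lu Hi0.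
have Du' : deg_le (shiftL m u) 0.
  by move=> i Hi; rewrite /shiftL Dm //; lia.
have Hu0 : shiftL m u 0 != 0 by rewrite /shiftL add0r.
have [v [Dv Hv]] := inv0 Du' Hu0.
have Lv : is_laurent v by exists 0.
exists (shiftL m v); split; first exact: shiftL_laurent.
exact: prod_shift_move.
Qed.

Lemma div_exists u b : is_laurent u -> is_laurent b -> (exists i, u i != 0) ->
  exists x, is_laurent x /\ is_prod u x b.
Proof.
move=> Lu Lb Hnz; have [v [Lv Hv]] := inv_exists Lu Hnz.
have [x Hx] := prod_exists Lb Lv.
have Lx := prod_laurent Lb Lv Hx.
exists x; split => //.
(* u (b v) = (u b) v ... use b u = u b *)
have [ub Hub] := prod_exists Lu Lb.
have Lub := prod_laurent Lu Lb Hub.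
have [y Hy] := prod_exists Lub Lv.
have Hy1 := prod_assoc Lu Lb Lv Hub Hx Hy.
have Hbu := prod_comm Lu Lb Hub.
have Hy2 := prod_assoc Lb Lu Lv Hbu Hv Hy.
have Hb1 := prod_one Lb.
by rewrite (prod_unique Hy2 Hb1) in Hy1.
Qed.

Lemma floor_unique x p q : is_floor x p -> is_floor x q -> p = q.
Proof.
move=> Hp Hq; apply/polyP => i.
by have := Hp i%:Z isT; have := Hq i%:Z isT => /= <- <-.
Qed.

Lemma laurent_add a b : is_laurent a -> is_laurent b -> is_laurent (addL a b).
Proof.
case=> ma Ha [mb Hb]; exists (Num.max ma mb) => i; rewrite gt_max => /andP[h1 h2].
by rewrite /addL Ha ?Hb ?addr0.
Qed.

Lemma laurent_sub a b : is_laurent a -> is_laurent b -> is_laurent (subL a b).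
Proof.
case=> ma Ha [mb Hb]; exists (Num.max ma mb) => i; rewrite gt_max => /andP[h1 h2].
by rewrite /subL Ha ?Hb ?subrr.
Qed.

Lemma laurent_scale k a : is_laurent a -> is_laurent (scaleL k a).
Proof. case=> ma Ha; exists ma => i Hi; by rewrite /scaleL Ha ?mulr0. Qed.

Lemma polyL_add p q : polyL (p + q) = addL (polyL p) (polyL q).
Proof. apply: functional_extensionality => i; rewrite /addL /polyL coefD; case: ifP => // _; by rewrite addr0. Qed.

Lemma polyL_sub p q : polyL (p - q) = subL (polyL p) (polyL q).
Proof. apply: functional_extensionality => i; rewrite /subL /polyL coefB; case: ifP => // _; by rewrite subr0. Qed.

Lemma polyL_scale k p : polyL (k *: p) = scaleL k (polyL p).
Proof. apply: functional_extensionality => i; rewrite /scaleL /polyL coefZ; case: ifP => // _; by rewrite mulr0. Qed.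

Lemma polyL_Xn (k : nat) n : polyL 'X^k n = if n == k%:Z then 1 else 0.
Proof. rewrite /polyL coefXn; case: n => [m|m] //=; rewrite eqz_nat; by case: (m == k). Qed.

Lemma sq_coef s D (d : nat) i : is_prod s s (polyL D) -> deg_le s d%:Z -> s d%:Z = 1 ->
  i < d%:Z -> (forall j, i < j -> j < d%:Z -> s j = 0) -> polyL D (d%:Z + i) = s i + s i.
Proof.
move=> H Ds Sd Hi Hz.
rewrite (prod_sum (l := [:: i; d%:Z]) Ds Ds H).
- rewrite big_cons big_seq1 /prodF.
  have -> : d%:Z + i - i = d%:Z by lia.
  have -> : d%:Z + i - d%:Z = i by lia.
  by rewrite Sd mulr1 mul1r.
- by rewrite /= inE andbT; apply/eqP; lia.
move=> j Hj; have := prodF_nz Ds Ds Hj => Hb.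
rewrite !inE; case: (eqVneq j i) => //= Eji; case: (eqVneq j d%:Z) => //= Ejd.
move: Hj; rewrite /prodF Hz ?mul0r ?eqxx //; lia.
Qed.

Lemma sq_zero s D (d : nat) lo : is_prod s s (polyL D) -> deg_le s d%:Z -> s d%:Z = 1 ->
  (forall i, lo < i -> i < d%:Z -> polyL D (d%:Z + i) = 0) ->
  forall i, lo < i -> i < d%:Z -> s i = 0.
Proof.
move=> H Ds Sd HD.
suff K : forall k : nat, forall i, d%:Z - k%:Z <= i -> lo < i -> i < d%:Z -> s i = 0.
  move=> i h1 h2; apply: (K (absz (d%:Z - i))) => //; lia.
elim=> [|k IH] i h0 h1 h2; first by lia.
case: (ltP (d%:Z - k%:Z - 1) i) => h3; first by apply: IH => //; lia.
have Hz : forall j, i < j -> j < d%:Z -> s j = 0 by move=> j j1 j2; apply: IH => //; lia.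
have := sq_coef H Ds Sd h2 Hz; rewrite HD // => E; lra.
Qed.

Section Periodic.
Variables (s : laurent) (A : {poly rat}) (c : rat) (e : nat) (a1 : {poly rat}).
Variables (alpha : nat -> laurent) (a : nat -> {poly rat}).
Hypothesis Ls : is_laurent s.
Hypothesis Fs : is_floor s A.
Hypothesis c0 : c != 0.
Hypothesis Hc0 : is_prod (subL s (polyL A)) (addL s (polyL A)) (polyL (c *: 'X^e)).
Hypothesis Ha1 : forall n, polyL a1 n = c^-1 * (2 * polyL A (n + e%:Z)).
Hypothesis Hcf : cf_expansion s alpha a.

Let W := addL s (polyL A).
Let U := scaleL c^-1 (shiftL e%:Z W).

Let LW : is_laurent W. Proof. exact: laurent_add Ls (polyL_laurent A). Qed.
Let LU : is_laurent U. Proof. exact: laurent_scale (shiftL_laurent _ LW). Qed.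
Let LsA : is_laurent (subL s (polyL A)). Proof. exact: laurent_sub Ls (polyL_laurent A). Qed.

Let sA i : 0 <= i -> s i = polyL A i.
Proof. by move=> Hi; rewrite Fs // /polyL Hi. Qed.

Let FW : is_floor W (2%:R *: A).
Proof. move=> i Hi; rewrite /W /addL sA // coefZ /polyL Hi; ring. Qed.

Let FU : is_floor U a1.
Proof.
move=> i Hi; rewrite /U /scaleL /shiftL /W /addL sA; last by lia.
have := Ha1 i; rewrite /polyL Hi => ->; congr (_ * _); ring.
Qed.

Let E1 : shiftL e%:Z (scaleL c^-1 (polyL (c *: 'X^e))) = oneL.
Proof.
apply: functional_extensionality => i; rewrite /shiftL /scaleL polyL_scale /scaleL polyL_Xn oneLE.
case: eqP => E; case: eqP => E' //; try lia.
  by rewrite mulr1 mulVf.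
by rewrite !mulr0.
Qed.

Let P1 : is_prod (subL s (polyL A)) U oneL.
Proof.
have := prod_shift e%:Z (prod_scaler c^-1 Hc0); rewrite E1.
by have -> : shiftL e%:Z (scaleL c^-1 W) = U.
Qed.

Let P2 : is_prod (subL U (polyL a1)) W oneL.
Proof.
have H := prod_shiftl e%:Z (laurent_scale c^-1 LsA) LW (prod_scalel c^-1 Hc0).
rewrite E1 in H.
have -> : subL U (polyL a1) = shiftL e%:Z (scaleL c^-1 (subL s (polyL A))) => //.
apply: functional_extensionality => i.
rewrite /subL /U /shiftL /scaleL /W /addL Ha1; ring.
Qed.

Let P3 : is_prod (subL W (polyL (2%:R *: A))) U oneL.
Proof.
have -> : subL W (polyL (2%:R *: A)) = subL s (polyL A) => //.
apply: functional_extensionality => i; rewrite polyL_scale /subL /W /addL /scaleL; ring.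
Qed.

Definition Xcf h := if h == 0%N then s else if odd h then U else W.
Definition Fcf h := if h == 0%N then A else if odd h then a1 else 2%:R *: A.

Lemma Xcf_floor h : is_floor (Xcf h) (Fcf h).
Proof. rewrite /Xcf /Fcf; case: eqP => // _; case: ifP => //. Qed.

Lemma Xcf_laurent h : is_laurent (Xcf h).
Proof. rewrite /Xcf; case: eqP => // _; case: ifP => //. Qed.

Lemma Xcf_prod h : is_prod (subL (Xcf h) (polyL (Fcf h))) (Xcf h.+1) oneL.
Proof.
rewrite /Xcf /Fcf /=; case: eqP => [->|Hh] //=.
case: ifP => //= _.
Qed.

Lemma cf_periodic h : alpha h = Xcf h /\ a h = Fcf h.
Proof.
have Ha : forall h, alpha h = Xcf h -> a h = Fcf h.
  move=> k Hk; have [_ [Fk _]] := (proj2 Hcf) k.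
  by rewrite Hk in Fk; apply: floor_unique Fk (Xcf_floor k).
suff Hal : alpha h = Xcf h by split => //; apply: Ha.
elim: h => [|h IH]; first by case: Hcf.
have [Lh [Fh Ph]] := (proj2 Hcf) h.
have [LS _] := (proj2 Hcf) h.+1.
rewrite IH (Ha h IH) in Ph.
have Lu : is_laurent (subL (Xcf h) (polyL (Fcf h))).
  exact: laurent_sub (Xcf_laurent h) (polyL_laurent _).
have nz : exists j, subL (Xcf h) (polyL (Fcf h)) j != 0.
  by apply: (nonzero_of_prod (i := 0) Ph); rewrite oneLE eqxx oner_neq0.
exact: prod_cancel Lu LS (Xcf_laurent h.+1) nz Ph (Xcf_prod h).
Qed.

End Periodic.

Lemma polyL_deg' p : deg_le (polyL p) ((size p).-1)%:Z.
Proof.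
move=> i Hi; rewrite /polyL; case: ifP => // _; apply: nth_default.
case: i Hi => // n; rewrite ltz_nat => H; case: (size p) H => //= k H; exact: H.
Qed.

Lemma polyL_lead p : p != 0 -> lead_at (polyL p) ((size p).-1)%:Z.
Proof. by move=> Hp; split; [rewrite polyL_nat -lead_coefE lead_coef_eq0 | exact: polyL_deg']. Qed.

Lemma polyL_size p m : deg_le (polyL p) m -> 0 <= m + 1 -> (size p)%:Z <= m + 1.
Proof.
move=> H Hm; case: (eqVneq p 0) => [->|Hp]; first by rewrite size_poly0.
case: (lerP (size p)%:Z (m + 1)) => // Hlt.
have := H ((size p).-1)%:Z; rewrite polyL_nat -lead_coefE => Hc.
have : lead_coef p = 0 by apply: Hc; move: Hlt; case: (size p) => [|n] /=; lia.
by move/eqP; rewrite lead_coef_eq0 (negbTE Hp).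
Qed.

Lemma lead_unique x m m' : lead_at x m -> lead_at x m' -> m = m'.
Proof.
move=> [H1 D1] [H2 D2]; case: (ltgtP m m') => // E.
  by move: H2; rewrite D1 ?eqxx.
by move: H1; rewrite D2 ?eqxx.
Qed.

Lemma prod_nonzero a b c : is_laurent a -> is_laurent b -> (exists i, a i != 0) ->
  (exists i, b i != 0) -> is_prod a b c -> exists i, c i != 0.
Proof.
move=> La Lb [i Hi] [j Hj] H.
have [ma Ha] := lead_exists La Hi; have [mb Hb] := lead_exists Lb Hj.
exists (ma + mb); rewrite (prod_lead Ha Hb H) mulf_neq0 //; [exact: Ha.1 | exact: Hb.1].
Qed.

Lemma polyL_nz p : p != 0 -> exists i, polyL p i != 0.
Proof. by move=> Hp; exists ((size p).-1)%:Z; exact: (polyL_lead Hp).1. Qed.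

Lemma diff_sq X Z p : is_laurent X -> is_prod X X (polyL Z) ->
  is_prod (subL X (polyL p)) (addL X (polyL p)) (polyL (Z - p * p)).
Proof.
move=> LX H.
have [Xp HXp] := prod_exists LX (polyL_laurent p).
have H1 := prod_addr H HXp.
have H2 := prod_addr (prod_comm LX (polyL_laurent p) HXp) (prod_poly p p).
have := prod_subl H1 H2.
have -> // : subL (addL (polyL Z) Xp) (addL Xp (polyL (p * p))) = polyL (Z - p * p).
apply: functional_extensionality => i; rewrite polyL_sub /subL /addL; ring.
Qed.

Lemma sq_mul s D q X : is_laurent s -> is_prod s s (polyL D) -> is_prod (polyL q) s X ->
  is_prod X X (polyL (q * (q * D))).
Proof.
move=> Ls HD HX.
have Lq := polyL_laurent q; have LX := prod_laurent Lq Ls HX.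
have [Y HY] := prod_exists LX Ls.
have H1 := prod_assoc Lq Ls Ls HX HD HY.
rewrite (prod_unique H1 (prod_poly q D)) in HY.
have HY' := prod_comm LX Ls HY.
have [Z HZ] := prod_exists LX LX.
have H2 := prod_assoc Lq Ls LX HX HY' HZ.
by rewrite (prod_unique H2 (prod_poly q (q * D))) in HZ.
Qed.

Lemma cf_step x y (b : {poly rat}) p q : is_laurent x -> is_laurent y -> is_floor x b ->
  is_prod (subL x (polyL b)) y oneL -> q != 0 -> is_prod (polyL q) x (polyL p) ->
  exists q' : {poly rat}, q' != 0 /\ (size q' < size q)%N /\ is_prod (polyL q') y (polyL q).
Proof.
move=> Lx Ly Fx Hy Hq Hx.
set u := subL x (polyL b).
have Lu : is_laurent u by exact: laurent_sub Lx (polyL_laurent b).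
have Hu : is_prod (polyL q) u (polyL (p - q * b)).
  by rewrite polyL_sub; apply: prod_subr Hx (prod_poly q b).
have Du : deg_le u (-1).
  move=> i Hi; rewrite /u /subL Fx; last by lia.
  by rewrite /polyL; case: ifP; [rewrite subrr | lia].
have Dq' := prod_deg_le (@polyL_deg' q) Du Hu.
have Lq := polyL_laurent q.
have [Y HY] := prod_exists (polyL_laurent (p - q * b)) Ly.
have H1 := prod_assoc Lq Lu Ly Hu Hy HY.
rewrite (prod_unique H1 (prod_one Lq)) in HY.
exists (p - q * b); split; last split => //.
  apply/eqP => E; have [i Hi] := polyL_nz Hq.
  have [j] := nonzero_of_prod HY Hi; rewrite E /polyL; case: ifP; rewrite ?coef0 ?eqxx //.
have Hs : (0 < size q)%N by rewrite size_poly_gt0.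
have := polyL_size Dq'; move=> /(_ ltac:(lia)); lia.
Qed.

Lemma cf_irrational x alpha a p q : cf_expansion x alpha a -> q != 0 ->
  ~ is_prod (polyL q) x (polyL p).
Proof.
move=> [H0 Hcf] Hq Hx.
suff K : forall h, exists p' q' : {poly rat}, q' != 0 /\ (size q' + h <= size q)%N /\
   is_prod (polyL q') (alpha h) (polyL p').
  have [p' [q' [Hq' [Hs _]]]] := K (size q).
  have : (size q' = 0)%N by lia.
  by move/eqP; rewrite size_poly_eq0 (negbTE Hq').
elim=> [|h [p' [q' [Hq' [Hs Hh]]]]]; first by exists p, q; rewrite H0 addn0.
have [Lh [Fh Ph]] := Hcf h; have [Lh1 _] := Hcf h.+1.
have [q'' [Hq'' [Hs' H']]] := cf_step Lh Lh1 Fh Ph Hq' Hh.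
exists q', q''; split => //; split => //; lia.
Qed.

Lemma polyL0 : polyL 0 = zeroL.
Proof. apply: functional_extensionality => i; rewrite /polyL coef0; by case: ifP. Qed.

Lemma sqrt_laurent D d s : is_sqrt D d s -> is_laurent s.
Proof. by case. Qed.

Lemma no_good_approx D (d : nat) s alpha a k r : is_sqrt D d s -> cf_expansion s alpha a ->
  d%:Z < k -> good_approx s k r -> False.
Proof.
move=> [Ls [HD [Sd Ds]]] Hcf Hk [Lr [p [q [Hq [Hr Hd]]]]].
set qd := ((size q).-1)%:Z.
have Dq : deg_le (polyL q) qd := @polyL_deg' q.
have Lq := polyL_laurent q.
have [X HX] := prod_exists Lq Ls.
have LX := prod_laurent Lq Ls HX.
have HE : is_prod (polyL q) (subL s r) (subL X (polyL p)) := prod_subr HX Hr.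
have DE := prod_deg_le Dq Hd HE.
have Dr : deg_le r d%:Z.
  move=> i Hi; have := Hd i; rewrite /subL Ds // sub0r => H.
  by apply/eqP; rewrite -oppr_eq0 H //; rewrite /degp; lia.
have Dp := prod_deg_le Dq Dr Hr.
have DX := prod_deg_le Dq Ds HX.
have DF : deg_le (addL X (polyL p)) (qd + d%:Z).
  by move=> i Hi; rewrite /addL DX ?Dp ?addr0.
have HG := diff_sq p LX (sq_mul Ls HD HX).
have DG := prod_deg_le DE DF HG.
have HZ : q * (q * D) - p * p = 0.
  apply/polyP => i; rewrite coef0 -polyL_nat DG //.
  rewrite /degp -/qd in DE *; lia.
have LE : is_laurent (subL X (polyL p)) := laurent_sub LX (polyL_laurent p).
have LF : is_laurent (addL X (polyL p)) := laurent_add LX (polyL_laurent p).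
rewrite HZ polyL0 in HG.
case: (Classical_Prop.classic (exists i, subL X (polyL p) i != 0)) => HnE.
  case: (Classical_Prop.classic (exists i, addL X (polyL p) i != 0)) => HnF.
    by have [i] := prod_nonzero LE LF HnE HnF HG; rewrite /zeroL eqxx.
  apply: (cf_irrational (p := - p) Hcf Hq).
  have -> : polyL (- p) = X => //.
  apply: functional_extensionality => i.
  have E : addL X (polyL p) i = 0.
    by apply/eqP; apply/negPn/negP => Hi; apply: HnF; exists i.
  move: E; rewrite /addL /polyL coefN; case: ifP => _ E; lra.
apply: (cf_irrational (p := p) Hcf Hq).
have -> : polyL p = X => //.
apply: functional_extensionality => i; apply/eqP; apply/negPn/negP => Hi; apply: HnE.
by exists i; rewrite /subL subr_eq0 eq_sym.
Qed.

Lemma polyLN1 i : polyL (-1) i = if i == 0 then -1 else 0.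
Proof. rewrite /polyL coefN coef1; case: i => [[|n]|n] //=; by rewrite oppr0. Qed.

Lemma pell_approx D (d : nat) s P Q : is_sqrt D d s -> P * P - D * (Q * Q) = 1 -> Q != 0 ->
  0 < lead_coef P -> 0 < lead_coef Q -> size P = (size Q + d)%N ->
  exists r, good_approx s d%:Z r /\ lead_at (subL s r) (- d%:Z - 2 * degp Q).
Proof.
move=> [Ls [HD [Sd Ds]]] HP HQ lP lQ sP.
set qd := degp Q.
have Lq := polyL_laurent Q; have LQ : lead_at (polyL Q) qd := polyL_lead HQ.
have Ps : lead_at s d%:Z by split => //; rewrite Sd oner_neq0.
have [r [Lr Hr]] := div_exists Lq (polyL_laurent P) (polyL_nz HQ).
have [X HX] := prod_exists Lq Ls; have LX := prod_laurent Lq Ls HX.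
have HG := diff_sq P LX (sq_mul Ls HD HX).
have E1 : Q * (Q * D) - P * P = -1 by rewrite -HP; ring.
rewrite E1 in HG.
have sQ : (0 < size Q)%N by rewrite size_poly_gt0.
have LF : lead_at (addL X (polyL P)) (qd + d%:Z).
  split.
    rewrite /addL (prod_lead LQ Ps HX) Sd mulr1.
    have -> : qd + d%:Z = ((size P).-1)%:Z by rewrite /qd /degp sP; lia.
    rewrite polyL_nat -lead_coefE /qd /degp polyL_nat -lead_coefE.
    by apply/lt0r_neq0; apply: addr_gt0.
  have DX := prod_deg_le LQ.2 Ds HX.
  move=> i Hi; rewrite /addL DX ?(@polyL_deg' P) ?addr0 //.
  move: Hi; rewrite /qd /degp sP; lia.
have LE : is_laurent (subL X (polyL P)) := laurent_sub LX (polyL_laurent P).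
have nzE : exists i, subL X (polyL P) i != 0.
  by apply: (nonzero_of_prod (i := 0) HG); rewrite polyLN1 eqxx oppr_eq0 oner_neq0.
have [i0 Hi0] := nzE; have [mE HmE] := lead_exists LE Hi0.
have EmE : mE + (qd + d%:Z) = 0.
  have := prod_lead HmE LF HG; rewrite polyLN1; case: eqP => // _ /esym/eqP.
  by rewrite mulf_eq0 (negbTE HmE.1) (negbTE LF.1).
have HZ : is_prod (polyL Q) (subL s r) (subL X (polyL P)) := prod_subr HX Hr.
have LZ : is_laurent (subL s r) := laurent_sub Ls Lr.
have nzZ : exists i, subL s r i != 0.
  exact: nonzero_of_prod (prod_comm Lq LZ HZ) HmE.1.
have [i1 Hi1] := nzZ; have [mZ HmZ] := lead_exists LZ Hi1.
have LEZ : lead_at (subL X (polyL P)) (qd + mZ).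
  split; last exact: prod_deg_le LQ.2 HmZ.2 HZ.
  rewrite (prod_lead LQ HmZ HZ) mulf_neq0 //; [exact: LQ.1 | exact: HmZ.1].
have EZ := lead_unique HmE LEZ.
have Em : mZ = - d%:Z - 2 * qd by lia.
exists r; split; last by rewrite -Em.
split => //; exists P, Q; split => //; split => //.
by apply: (deg_le_mono HmZ.2); rewrite Em /qd; lia.
Qed.

Lemma mul_pos (p q : {poly rat}) : 0 < lead_coef p -> 0 < lead_coef q ->
  size (p * q) = (size p + size q).-1 /\ 0 < lead_coef (p * q).
Proof.
move=> hp hq; have p0 : p != 0 by rewrite -lead_coef_eq0 lt0r_neq0.
have q0 : q != 0 by rewrite -lead_coef_eq0 lt0r_neq0.
by rewrite size_mul // lead_coefM mulr_gt0.
Qed.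

Lemma add_pos (f g : {poly rat}) : size f = size g -> 0 < lead_coef f -> 0 < lead_coef g ->
  size (f + g) = size f /\ 0 < lead_coef (f + g).
Proof.
move=> E hf hg; have f0 : f != 0 by rewrite -lead_coef_eq0 lt0r_neq0.
have sf : (0 < size f)%N by rewrite size_poly_gt0.
have C : (f + g)`_(size f).-1 = lead_coef f + lead_coef g.
  by rewrite coefD /lead_coef E.
have C0 : (f + g)`_(size f).-1 != 0 by rewrite C lt0r_neq0 // addr_gt0.
have Hs : size (f + g) = size f.
  apply/eqP; rewrite eqn_leq; apply/andP; split.
    by have := size_polyD f g; rewrite -E maxnn.
  case: (leqP (size f) (size (f + g))) => // H; move: C0.
  by rewrite nth_default ?eqxx // -ltnS prednK.
by split => //; rewrite /lead_coef Hs C addr_gt0.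
Qed.

Section Pell.
Variables (D P Q : {poly rat}) (d : nat).
Hypotheses (hd : (0 < d)%N) (sD : size D = (2 * d).+1) (lD : 0 < lead_coef D)
  (HP : P * P - D * (Q * Q) = 1) (lP : 0 < lead_coef P) (lQ : 0 < lead_coef Q)
  (sP : size P = (size Q + d)%N).

Fixpoint pell (n : nat) : {poly rat} * {poly rat} :=
  match n with
  | 0%N => (P, Q)
  | n'.+1 => let pq := pell n' in (P * pq.1 + D * Q * pq.2, P * pq.2 + Q * pq.1)
  end.

Lemma pell_inv n : let pq := pell n in
  pq.1 * pq.1 - D * (pq.2 * pq.2) = 1 /\ 0 < lead_coef pq.1 /\ 0 < lead_coef pq.2 /\
  size pq.1 = (size pq.2 + d)%N /\ (n < size pq.2)%N.
Proof.
have sQ : (0 < size Q)%N by rewrite size_poly_gt0 -lead_coef_eq0 lt0r_neq0.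
elim: n => [|n IH] /=; first by [].
move: IH; case: (pell n) => Pn Qn /= [Hn [lPn [lQn [sPn sQn]]]].
have [s1 l1] := mul_pos lP lPn.
have [s2 l2] := mul_pos (proj2 (mul_pos lD lQ)) lQn.
rewrite (proj1 (mul_pos lD lQ)) in s2.
have [s3 l3] := mul_pos lP lQn.
have [s4 l4] := mul_pos lQ lPn.
have e5 : size (P * Pn) = size (D * Q * Qn).
  rewrite s1 s2 sP sPn sD; have := sQ; have := hd; have := sQn; set x := size Q; set y := size Qn; clearbody x y; lia.
have [s5 l5] := add_pos e5 l1 l2.
have e6 : size (P * Qn) = size (Q * Pn).
  rewrite s3 s4 sP sPn; have := sQ; have := hd; have := sQn; set x := size Q; set y := size Qn; clearbody x y; lia.
have [s6 l6] := add_pos e6 l3 l4.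
split.
  transitivity ((P * P - D * (Q * Q)) * (Pn * Pn - D * (Qn * Qn))); first by ring.
  by rewrite HP Hn mulr1.
split => //; split => //; rewrite s5 s6 s1 s3 sP sPn; have := sQ; have := hd; have := sQn; set x := size Q; set y := size Qn; clearbody x y; split; lia.
Qed.

End Pell.

Lemma lagr_gen D (d : nat) s alpha a P Q : (0 < d)%N -> is_sqrt D d s ->
  cf_expansion s alpha a -> size D = (2 * d).+1 -> 0 < lead_coef D ->
  P * P - D * (Q * Q) = 1 -> 0 < lead_coef P -> 0 < lead_coef Q -> size P = (size Q + d)%N ->
  lagrange_eq s d%:Z.
Proof.
move=> hd Hs Hcf sD lD HP lP lQ sP; split; last first.
  move=> k Hk; case: (lerP k d%:Z) => // Hlt; exfalso; apply: Hk.
  by exists nil => r /(no_good_approx Hs Hcf Hlt).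
move=> [l Hl].
have [M HM] : exists M : int, forall r, List.In r l -> forall m, lead_at (subL s r) m -> M <= m.
  elim: l {Hl} => [|r0 l [M HM]]; first by exists 0.
  case: (Classical_Prop.classic (exists m, lead_at (subL s r0) m)) => [[m0 Hm0]|Hn].
    exists (Num.min M m0) => r [<-|Hr] m Hm.
      by rewrite (lead_unique Hm0 Hm) ge_min lexx orbT.
    by rewrite ge_min (HM r Hr m Hm).
  exists M => r [<-|Hr] m Hm; last exact: HM r Hr m Hm.
  by exfalso; apply: Hn; exists m.
have := pell_inv hd sD lD HP lP lQ sP (absz M).
case: (pell D P Q (absz M)) => Pn Qn /= [Hn [lPn [lQn [sPn sQn]]]].
have Qn0 : Qn != 0 by rewrite -lead_coef_eq0 lt0r_neq0.
have [r [Hr Lr]] := pell_approx Hs Hn Qn0 lPn lQn sPn.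
have := HM r (Hl r Hr) _ Lr; rewrite /degp; move: sQn hd; set y := size Qn; clearbody y; lia.
Qed.


Lemma two_neq0 : (2%:R : rat) != 0. Proof. by []. Qed.

Lemma sizeXn2 (k : nat) : size ((2%:R : rat) *: 'X^k) = k.+1.
Proof. by rewrite size_scale ?two_neq0 // size_polyXn. Qed.

Lemma size_P (k : nat) : (0 < k)%N -> size ((2%:R : rat) *: 'X^k + 1)%R = k.+1 /\
   lead_coef ((2%:R : rat) *: 'X^k + 1) = 2%:R.
Proof.
move=> hk; have H : (size (1%R : {poly rat}) < size ((2%:R : rat) *: 'X^k))%N.
  by rewrite sizeXn2 size_poly1.
by rewrite size_polyDl // lead_coefDl // lead_coefZ lead_coefXn mulr1 sizeXn2.
Qed.

Lemma sizeD (d e : nat) : (e < 2 * d)%N ->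
  size ('X^(2 * d) + 'X^e : {poly rat}) = (2 * d).+1 /\ lead_coef ('X^(2 * d) + 'X^e : {poly rat}) = 1.
Proof.
move=> he; have H : (size ('X^e : {poly rat}) < size ('X^(2 * d) : {poly rat}))%N.
  by rewrite !size_polyXn.
by rewrite size_polyDl // lead_coefDl // lead_coefXn size_polyXn.
Qed.

Lemma case1 (d : nat) (hd : (0 < d)%N) (e : nat) (he : (e < d)%N)
  (s : laurent) (alpha : nat -> laurent) (a : nat -> {poly rat}) :
  is_sqrt ('X^(2 * d) + 'X^e) d s -> cf_expansion s alpha a ->
  (forall h : nat, (size (a h)).-1 = (if ~~ odd h then d else (d - e)%N)) /\
  lagrange_eq s d%:Z.
Proof.
move=> Hs Hcf; have [Ls [HD [Sd Ds]]] := Hs.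
set D := 'X^(2 * d) + 'X^e in Hs HD *.
have Z : forall i, e%:Z - d%:Z < i -> i < d%:Z -> s i = 0.
  apply: (sq_zero HD Ds Sd) => i h1 h2.
  rewrite /D polyL_add /addL !polyL_Xn.
  by (case: eqP; first lia); (case: eqP; first lia); rewrite addr0.
have Fs : is_floor s 'X^d.
  move=> i Hi; rewrite coefXn; case: (ltgtP i d%:Z) => H.
  - have -> : (absz i == d) = false by apply/eqP; lia.
    by apply: Z => //; lia.
  - have -> : (absz i == d) = false by apply/eqP; lia.
    by rewrite Ds.
  - by rewrite H Sd /= eqxx.
have Hc0 : is_prod (subL s (polyL 'X^d)) (addL s (polyL 'X^d)) (polyL (1 *: 'X^e)).
  have := diff_sq 'X^d Ls HD.
  have -> // : D - 'X^d * 'X^d = 1 *: 'X^e.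
  by rewrite /D -exprD addnn -mul2n scale1r; ring.
have Ha1 : forall n, polyL (2%:R *: 'X^(d - e)) n = 1^-1 * (2 * polyL 'X^d (n + e%:Z)).
  move=> n; rewrite polyL_scale /scaleL !polyL_Xn invr1 mul1r.
  have -> : (n + e%:Z == d%:Z) = (n == (d - e)%N%:Z) by apply/eqP/eqP; lia.
  by case: eqP.
have CP := cf_periodic Ls Fs (oner_neq0 _) Hc0 Ha1 Hcf.
split.
  move=> h; rewrite (proj2 (CP h)) /Fcf.
  case: eqP => [->|h0]; first by rewrite size_polyXn.
  by case: ifP => _ /=; rewrite sizeXn2.
have [sD lD] := sizeD (d := d) (e := e) ltac:(lia).
have [sP lP] := size_P (k := (2 * d - e)%N) ltac:(lia).
have L := @lagr_gen D d s alpha a (2%:R *: 'X^(2 * d - e) + 1) (2%:R *: 'X^(d - e)) hd Hs Hcf sD.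
apply: L.
- by rewrite lD.
- have E1 : 'X^(2 * d - e) = 'X^e * 'X^(d - e) * 'X^(d - e) :> {poly rat}.
    by rewrite -!exprD; congr ('X^_); lia.
  have E2 : 'X^(2 * d) = 'X^e * 'X^e * 'X^(d - e) * 'X^(d - e) :> {poly rat}.
    by rewrite -!exprD; congr ('X^_); lia.
  rewrite /D E1 E2 -!mul_polyC !polyC_natr; ring.
- by rewrite lP.
- by rewrite lead_coefZ lead_coefXn mulr1.
- by rewrite sP sizeXn2; lia.
Qed.

Lemma case2 (d : nat) (hd : (0 < d)%N)
  (s : laurent) (alpha : nat -> laurent) (a : nat -> {poly rat}) :
  is_sqrt ('X^(2 * d) + 'X^d) d s -> cf_expansion s alpha a ->
  (forall h : nat, (size (a h)).-1 = d) /\ lagrange_eq s d%:Z.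
Proof.
move=> Hs Hcf; have [Ls [HD [Sd Ds]]] := Hs.
set D := 'X^(2 * d) + 'X^d in Hs HD *.
have Z : forall i, 0 < i -> i < d%:Z -> s i = 0.
  apply: (sq_zero HD Ds Sd) => i h1 h2.
  rewrite /D polyL_add /addL !polyL_Xn.
  by (case: eqP; first lia); (case: eqP; first lia); rewrite addr0.
have S0 : s 0 = 2^-1.
  have := sq_coef (i := 0) HD Ds Sd ltac:(lia) Z.
  rewrite /D polyL_add /addL !polyL_Xn addr0.
  (case: eqP; first lia) => _; rewrite eqxx add0r => E.
  have E2 : s 0 = (s 0 + s 0) / 2 by field.
  by rewrite E2 -E.
set A : {poly rat} := 'X^d + (2^-1)%:P.
have Fs : is_floor s A.
  move=> i Hi; rewrite /A coefD coefXn coefC; case: (ltgtP i d%:Z) => H.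
  - have -> : (absz i == d) = false by apply/eqP; lia.
    case: (eqVneq i 0) => [->|i0] /=; first by rewrite S0 add0r.
    have -> : (absz i == 0%N) = false by apply/eqP; lia.
    by rewrite addr0; apply: Z => //; lia.
  - have -> : (absz i == d) = false by apply/eqP; lia.
    have -> : (absz i == 0%N) = false by apply/eqP; lia.
    by rewrite Ds ?addr0.
  - rewrite H Sd /= eqxx; have -> : (d == 0%N) = false by apply/eqP; lia.
    by rewrite addr0.
set c : rat := - 4%:R^-1.
have c0 : c != 0 by rewrite /c oppr_eq0 invr_eq0.
have Hc0 : is_prod (subL s (polyL A)) (addL s (polyL A)) (polyL (c *: 'X^0)).
  have := diff_sq A Ls HD.
  have -> // : D - A * A = c *: 'X^0.
  set t : {poly rat} := 'X^d; set h : {poly rat} := (2^-1)%:P.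
  have Hh : h + h = 1 by rewrite /h -polyCD; congr (_%:P); field.
  have Ehh : h * h = (4%:R^-1)%:P by rewrite /h -polyCM; congr (_%:P); field.
  have E2 : 'X^(2 * d) = t * t by rewrite /t -exprD addnn mul2n.
  rewrite /D /A -/t -/h E2.
  transitivity (- (h * h) + t * (1 - (h + h))); first by ring.
  by rewrite Hh subrr mulr0 addr0 Ehh expr0 alg_polyC /c polyCN.
have Ha1 : forall n, polyL ((-8%:R) *: A) n = c^-1 * (2 * polyL A (n + 0%N%:Z)).
  move=> n; rewrite polyL_scale /scaleL addr0 /c invrN invrK; ring.
have CP := cf_periodic Ls Fs c0 Hc0 Ha1 Hcf.
have sA : size A = d.+1.
  rewrite /A size_polyDl ?size_polyXn //.
  by apply: (leq_ltn_trans (size_polyC_leq1 _)); rewrite ?size_polyXn ltnS.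
split.
  move=> h; rewrite (proj2 (CP h)) /Fcf.
  case: h => [|h] /=; first by rewrite sA.
  by case: ifP => _ /=; rewrite size_scale ?sA // ?oppr_eq0.
have [sD lD] := sizeD (d := d) (e := d) ltac:(lia).
have [sP lP] := size_P (k := d) hd.
have L := @lagr_gen D d s alpha a (2%:R *: 'X^d + 1) (2%:R)%:P hd Hs Hcf sD.
apply: L.
- by rewrite lD.
- have E2 : 'X^(2 * d) = 'X^d * 'X^d :> {poly rat} by rewrite -exprD addnn mul2n.
  rewrite /D E2 -!mul_polyC !polyC_natr; ring.
- by rewrite lP.
- by rewrite lead_coefC.
- by rewrite sP size_polyC.
Qed.

Unset Implicit Arguments.

Theorem theorem3 (d : nat) (hd : (0 < d)%N) :
  (forall e : nat, (e < d)%N ->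
     forall (s : laurent) (alpha : nat -> laurent) (a : nat -> {poly rat}),
       is_sqrt ('X^(2 * d) + 'X^e) d s -> cf_expansion s alpha a ->
       (forall h : nat,
          (size (a h)).-1 = (if ~~ odd h then d else (d - e)%N)) /\
       lagrange_eq s d%:Z)
  /\
  (forall (s : laurent) (alpha : nat -> laurent) (a : nat -> {poly rat}),
       is_sqrt ('X^(2 * d) + 'X^d) d s -> cf_expansion s alpha a ->
       (forall h : nat, (size (a h)).-1 = d) /\
       lagrange_eq s d%:Z).
Proof.
split.
  by move=> e he s alpha a; apply: case1.
by move=> s alpha a; apply: case2.
Qed.
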